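(* Consider algorithm PredFL processing a demand $x$ with prediction $\hat f_x$ such that $d(x,\hat f_x)\le f$, and suppose that at that moment the nearest open facility $f_{open}$ to $x$ satisfies $r_x:=d(\hat f_x,f_{open})\le f$. Let $\mathrm{cost}_x$ denote the facility-opening cost incurred while processing $x$ plus the connection cost of $x$, where $x$ is connected to $\hat f_x$ if a facility is opened there and to $f_{open}$ otherwise. Then $$\mathbb E[\mathrm{cost}_x]\le d^*(x)+r_x+\frac{r_x}{f}\,\eta_x+\Bigl(1-\frac{r_x}{f}\Bigr)\eta_{open},$$ where $d^*(x)=d(x,c^*_x)$, $\eta_x=d(\hat f_x,c^*_x)$ and $\eta_{open}=d(f_{open},c^*_x)$.
   Context: Online Facility Location with uniform facility cost $f>0$ in a metric space $(\mathcal M,d)$; a fixed optimal offline solution assigns each demand $x$ to an optimal facility $c^*_x$. Algorithm PredFL: maintain the set $\mathcal O$ of open facilities; when demand $x$ with prediction $\hat f_x$ arrives, let $f_{open}=\arg\min_{j\in\mathcal O}d(x,j)$; if $d(x,\hat f_x)>f$ open a facility at $x$; otherwise, with $r_x=d(f_{open},\hat f_x)$, open a facility at $\hat f_x$ with probability $\min\{1,r_x/f\}$. *)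

(* Defs.v *)
From mathcomp Require Import all_boot all_order all_algebra.
Set Implicit Arguments. Unset Strict Implicit. Unset Printing Implicit Defensive.
Import Order.TTheory GRing.Theory Num.Theory.
Local Open Scope ring_scope.

Definition is_metric (R : realFieldType) (M : Type) (d : M -> M -> R) : Prop :=
  [/\ forall x y, 0 <= d x y,
      forall x y, d x y = 0 <-> x = y,
      forall x y, d x y = d y x
    & forall x y z, d x z <= d x y + d y z].

(* Offline facility location with uniform opening cost f.
   A solution is a finite set of open facilities S (a seq, duplicates ignored)
   together with an assignment sigma of demands to facilities. *)
Definition offline_feasible (M : eqType) (demands S : seq M) (sigma : M -> M) :=
  all (fun y => sigma y \in S) demands.

Definition offline_cost (R : realFieldType) (M : eqType) (d : M -> M -> R)
  (f : R) (demands S : seq M) (sigma : M -> M) : R :=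
  f * (size (undup S))%:R + \sum_(y <- demands) d y (sigma y).

Definition offline_optimal (R : realFieldType) (M : eqType) (d : M -> M -> R)
  (f : R) (demands S : seq M) (sigma : M -> M) : Prop :=
  offline_feasible demands S sigma /\
  forall S' sigma', offline_feasible demands S' sigma' ->
    offline_cost d f demands S sigma <= offline_cost d f demands S' sigma'.

(* The random choice is a Bernoulli coin
   [opened] with success probability p = min(1, r_x / f), r_x = d(fopen, fhat).
   [predfl_step_cost ... opened] is the opening cost plus connection cost of x
   given the outcome of the coin; the expected cost averages over the coin. *)
Definition predfl_open_prob (R : realFieldType) (M : Type) (d : M -> M -> R)
  (f : R) (fhat fopen : M) : R :=
  Num.min 1 (d fopen fhat / f).

Definition predfl_step_cost (R : realFieldType) (M : Type) (d : M -> M -> R)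
  (f : R) (x fhat fopen : M) (opened : bool) : R :=
  if f < d x fhat then f (* facility opened at x itself, connection cost 0 *)
  else if opened then f + d x fhat else d x fopen.

Definition predfl_expected_cost (R : realFieldType) (M : Type) (d : M -> M -> R)
  (f : R) (x fhat fopen : M) : R :=
  if f < d x fhat then f
  else let p := predfl_open_prob d f fhat fopen in
       p * predfl_step_cost d f x fhat fopen true
       + (1 - p) * predfl_step_cost d f x fhat fopen false.

(* Main.v *)
Require Import Defs.
From mathcomp Require Import all_boot all_order all_algebra.
From mathcomp Require Import lra.
Import Order.TTheory GRing.Theory Num.Theory.
Local Open Scope ring_scope.

Theorem mainTheorem4 (R : realFieldType) (M : eqType) (d : M -> M -> R) (f : R)
  (demands : seq M) (Sopt : seq M) (sigma : M -> M)
  (O : seq M) (x fhat fopen : M) :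
  is_metric d -> 0 < f ->
  offline_optimal d f demands Sopt sigma ->
  x \in demands ->
  fopen \in O -> (forall j, j \in O -> d x fopen <= d x j) ->
  d x fhat <= f ->
  d fhat fopen <= f ->
  let r := d fhat fopen in
  let c := sigma x in
  predfl_expected_cost d f x fhat fopen
    <= d x c + r + r / f * d fhat c + (1 - r / f) * d fopen c.
Proof.
move=> [d0 _ dsym dtri] f0 _ _ _ _ hxf hr; rewrite /= ; set r := d fhat fopen; set c := sigma x.
rewrite /predfl_expected_cost /predfl_step_cost ltNge hxf /=.
rewrite /predfl_open_prob.
have hp : r / f <= 1 by rewrite ler_pdivrMr // mul1r.
have hmin : Num.min 1 (d fopen fhat / f) = r / f.
  by rewrite /r dsym; apply/min_idPr.
rewrite hmin.
have p0 : 0 <= r / f by rewrite divr_ge0 // ?d0 // ltW.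
have h1 : d x fhat <= d x c + d fhat c by rewrite (dsym fhat c); apply: dtri.
have h2 : d x fopen <= d x c + d fopen c by rewrite (dsym fopen c); apply: dtri.
have e : r / f * f = r by rewrite divfK // gt_eqF.
have q0 : 0 <= 1 - r / f by rewrite subr_ge0.
have a1 := ler_wpM2l p0 h1.
have a2 := ler_wpM2l q0 h2.
rewrite mulrDr e.
set p := r / f in p0 q0 a1 a2 e *.
rewrite !mulrDr in a1 a2.
have : p * d x c + (1 - p) * d x c = d x c by rewrite -mulrDl subrKC mul1r.
move: a1 a2; set A := p * d x fhat; set B := (1 - p) * d x fopen;
  set C := p * d x c; set D := (1 - p) * d x c; set E := p * d fhat c;
  set F := (1 - p) * d fopen c => a1 a2 hCD.
rewrite -hCD; lra.
Qed.
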